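(* Let $d,n\ge 1$, let $\boldsymbol{a}_1,\ldots,\boldsymbol{a}_n\in\mathbf{R}^d$, let $w_1,\ldots,w_n>0$, fix $\varepsilon>0$ and $0<p\le 2$. Let $\boldsymbol{x}^{(0)}\in\mathbf{R}^d$ be arbitrary and define, for $t\ge 0$, $$\mu_j^{(t)}=w_j\,(\lVert\boldsymbol{x}^{(t)}-\boldsymbol{a}_j\rVert^2+\varepsilon)^{p/2-1},\qquad \boldsymbol{x}^{(t+1)}=\frac{\sum_j\mu_j^{(t)}\boldsymbol{a}_j}{\sum_j\mu_j^{(t)}}.$$ Then $\lVert\boldsymbol{x}^{(t)}-\boldsymbol{x}^{(t+1)}\rVert\to 0$ as $t\to\infty$.
   Context: $\lVert\cdot\rVert$ is the Euclidean norm on $\mathbf{R}^d$. *)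

(* Defs.v *)
From HB Require Import structures.
From mathcomp Require Import all_boot all_order all_algebra.
From mathcomp Require Import all_classical all_reals all_analysis.
Set Implicit Arguments. Unset Strict Implicit. Unset Printing Implicit Defensive.
Import Order.TTheory GRing.Theory Num.Theory.
Local Open Scope ring_scope.

Section Weiszfeld.
Variable R : realType.

Definition enorm (d : nat) (v : 'rV[R]_d) : R :=
  Num.sqrt (\sum_(i < d) v 0 i ^+ 2).

Definition irls_mu (d n : nat) (a : 'I_n -> 'rV[R]_d) (w : 'I_n -> R)
  (eps p : R) (x : 'rV[R]_d) (j : 'I_n) : R :=
  w j * powR (enorm (x - a j) ^+ 2 + eps) (p / 2 - 1).

Definition irls_step (d n : nat) (a : 'I_n -> 'rV[R]_d) (w : 'I_n -> R)
  (eps p : R) (x : 'rV[R]_d) : 'rV[R]_d :=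
  (\sum_(j < n) irls_mu a w eps p x j)^-1 *:
    \sum_(j < n) (irls_mu a w eps p x j *: a j).

Definition irls_seq (d n : nat) (a : 'I_n -> 'rV[R]_d) (w : 'I_n -> R)
  (eps p : R) (x0 : 'rV[R]_d) (t : nat) : 'rV[R]_d :=
  iter t (irls_step a w eps p) x0.

End Weiszfeld.

(* Main.v *)
Require Import Defs.
From HB Require Import structures.
From mathcomp Require Import all_boot all_order all_algebra.
From mathcomp Require Import all_classical all_reals all_analysis.
From mathcomp Require Import ring lra.
Import Order.TTheory GRing.Theory Num.Theory.
Import numFieldNormedType.Exports.
Local Open Scope ring_scope.
Local Open Scope classical_set_scope.
Set Implicit Arguments. Unset Strict Implicit.

Section Aux.
Variable R : realType.

Lemma sid (n : nat) (mu b : 'I_n -> R) (y : R) :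
  \sum_j mu j != 0 ->
  \sum_j mu j * (y - b j) ^+ 2 =
  \sum_j mu j * ((\sum_j mu j)^-1 * \sum_j (mu j * b j) - b j) ^+ 2
  + (\sum_j mu j) * (y - (\sum_j mu j)^-1 * \sum_j (mu j * b j)) ^+ 2.
Proof.
move=> M0.
set M := \sum_j mu j; set S := \sum_j (mu j * b j); set T := \sum_j (mu j * b j ^+ 2).
have E z : \sum_j mu j * (z - b j) ^+ 2 = z ^+ 2 * M - 2 * z * S + T.
  rewrite /M /S /T 2!mulr_sumr -sumrB -big_split /=.
  by apply: eq_bigr => j _; ring.
set x := M^-1 * S.
have HS : S = M * x by rewrite /x mulrA mulfV // mul1r.
rewrite !E HS; ring.
Qed.

Lemma ge_sum_term (I : finType) (F : I -> R) j :
  (forall i, 0 <= F i) -> F j <= \sum_i F i.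
Proof.
move=> F0; rewrite (bigD1 j) //= lerDl; exact: sumr_ge0.
Qed.

Lemma conc (s s' q : R) : 0 < s -> 0 < s' -> 0 < q -> q <= 1 ->
  s' `^ q <= s `^ q + q * s `^ (q - 1) * (s' - s).
Proof.
move=> s0 s'0 q0 q1.
have [->|qlt1] := eqVneq q 1.
  rewrite subrr powRr0 (powRr1 (ltW s0)) (powRr1 (ltW s'0)); lra.
have q1' : q < 1 by rewrite lt_neqAle qlt1 q1.
set r := s' / s.
have r0 : 0 < r by rewrite divr_gt0.
have Y := @conjugate_powR R (r `^ q) 1 (q^-1) ((1 - q)^-1) (powR_ge0 _ _) ler01.
have Hy : r `^ q * 1 <= r * q + (1 - q).
  have := Y; rewrite !invr_gt0 q0 subr_gt0 q1' !invrK addrC subrK.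
  move=> /(_ isT isT erefl).
  by rewrite -powRrM mulfV ?gt_eqF // powRr1 ?(ltW r0) // powR1 mul1r.
rewrite mulr1 in Hy.
have -> : s' = r * s by rewrite /r mulrVK ?unitfE ?gt_eqF.
rewrite (powRM _ (ltW r0) (ltW s0)) powRB ?(powRr1 (ltW s0)); last by apply/implyP => _; rewrite gt_eqF.
have -> : s `^ q + q * (s `^ q / s) * (r * s - s) = s `^ q * (q * r + (1 - q)).
  by field; rewrite gt_eqF.
rewrite mulrC ler_pM2l ?powR_gt0 //.
by rewrite mulrC.
Qed.

Lemma anti (x y e : R) : 0 < x -> x <= y -> e <= 0 -> y `^ e <= x `^ e.
Proof.
move=> x0 xy e0.
have y0 : 0 < y := lt_le_trans x0 xy.
have -> : e = - (- e) by rewrite opprK.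
rewrite [y `^ _]powRN [x `^ _]powRN lef_pV2 ?posrE ?powR_gt0 //.
apply: (@ge0_ler_powR R (- e) _ x y _ _ xy).
- by rewrite oppr_ge0.
- by rewrite nnegrE ltW.
- by rewrite nnegrE ltW.
Qed.

End Aux.

Section Vec.
Variable R : realType.
Variables (d n : nat).

Definition sq (v : 'rV[R]_d) : R := \sum_(i < d) v 0 i ^+ 2.

Lemma sq_ge0 v : 0 <= sq v.
Proof. by apply: sumr_ge0 => i _; exact: sqr_ge0. Qed.

Lemma enorm_sq v : enorm v ^+ 2 = sq v.
Proof. by rewrite /enorm sqr_sqrtr // sq_ge0. Qed.

Lemma sqC (u v : 'rV[R]_d) : sq (u - v) = sq (v - u).
Proof. by apply: eq_bigr => i _; rewrite !mxE -sqrrN opprB. Qed.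

Lemma vid (mu : 'I_n -> R) (b : 'I_n -> 'rV[R]_d) (y : 'rV[R]_d) :
  \sum_j mu j != 0 ->
  let v := (\sum_j mu j)^-1 *: \sum_j (mu j *: b j) in
  \sum_j mu j * sq (y - b j) = \sum_j mu j * sq (v - b j) + (\sum_j mu j) * sq (y - v).
Proof.
move=> M0 v.
have Hv i : v 0 i = (\sum_j mu j)^-1 * \sum_j (mu j * b j 0 i).
  rewrite /v mxE summxE; congr (_ * _); apply: eq_bigr => j _; by rewrite mxE.
clearbody v.
rewrite /sq.
under eq_bigr do rewrite mulr_sumr.
under [X in _ = X + _]eq_bigr do rewrite mulr_sumr.
rewrite mulr_sumr exchange_big [X in _ = X + _]exchange_big -big_split /=.
apply: eq_bigr => i _.
under eq_bigr do rewrite !mxE.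
under [X in _ = X + _]eq_bigr do rewrite !mxE.
rewrite !mxE Hv.
exact: (@sid R n mu (fun j => b j 0 i) (y 0 i) M0).
Qed.

End Vec.

Section Main.

Lemma mu_gt0 (R : realType) d n (a : 'I_n -> 'rV[R]_d) (w : 'I_n -> R) (eps p : R) x j :
  0 < w j -> 0 < eps -> 0 < irls_mu a w eps p x j.
Proof.
move=> w0 e0; rewrite /irls_mu mulr_gt0 // powR_gt0 //.
by rewrite enorm_sq ltr_wpDl // sq_ge0.
Qed.

Lemma M_ge (R : realType) d n (a : 'I_n -> 'rV[R]_d) (w : 'I_n -> R) (eps p : R) x j :
  (forall j, 0 < w j) -> 0 < eps ->
  irls_mu a w eps p x j <= \sum_j irls_mu a w eps p x j.
Proof.
move=> w0 e0; apply: ge_sum_term => i; apply: ltW; exact: mu_gt0.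
Qed.

Definition Fobj (R : realType) d n (a : 'I_n -> 'rV[R]_d) (w : 'I_n -> R) (eps p : R) x :=
  \sum_j w j * (sq (x - a j) + eps) `^ (p / 2).

Lemma decrease (R : realType) d n (a : 'I_n -> 'rV[R]_d) (w : 'I_n -> R) (eps p : R) x
  (j0 : 'I_n) :
  (forall j, 0 < w j) -> 0 < eps -> 0 < p -> p <= 2 ->
  Fobj a w eps p (irls_step a w eps p x)
    + p / 2 * (\sum_j irls_mu a w eps p x j) * sq (x - irls_step a w eps p x)
  <= Fobj a w eps p x.
Proof.
move=> w0 e0 p0 p2.
set mu := irls_mu a w eps p x.
set M := \sum_j mu j.
have M0 : 0 < M := lt_le_trans (mu_gt0 a p x (w0 j0) e0) (M_ge a p x j0 w0 e0).
set v := irls_step a w eps p x.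
have Hid : \sum_j mu j * sq (x - a j) = \sum_j mu j * sq (v - a j) + M * sq (x - v).
  exact: (@vid _ _ _ mu a x (lt0r_neq0 M0)).
set q := p / 2.
have q0 : 0 < q by rewrite /q divr_gt0.
have q1 : q <= 1 by rewrite /q ler_pdivrMr //= mul1r.
have step1 : Fobj a w eps p v <=
   \sum_j (w j * (sq (x - a j) + eps) `^ q + q * (mu j * (sq (v - a j) - sq (x - a j)))).
  apply: ler_sum => j _.
  have := @conc R (sq (x - a j) + eps) (sq (v - a j) + eps) q.
  rewrite !ltr_wpDl ?sq_ge0 // => /(_ isT isT q0 q1) H.
  rewrite /mu /irls_mu enorm_sq.
  have -> : w j * (sq (x - a j) + eps) `^ q +
     q * (w j * (sq (x - a j) + eps) `^ (p / 2 - 1) * (sq (v - a j) - sq (x - a j)))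
     = w j * ((sq (x - a j) + eps) `^ q +
       q * (sq (x - a j) + eps) `^ (q - 1) * (sq (v - a j) + eps - (sq (x - a j) + eps))).
    rewrite /q; ring.
  by rewrite ler_wpM2l // ltW.
move: step1; rewrite big_split /= -mulr_sumr.
under [X in _ <= _ + _ * X]eq_bigr do rewrite mulrBr.
rewrite sumrB Hid /Fobj -/q => H.
lra.
Qed.

End Main.

Lemma bound (R : realType) d n (a : 'I_n -> 'rV[R]_d) (w : 'I_n -> R) (eps p : R) x
  (j0 : 'I_n) k :
  (forall j, 0 < w j) -> 0 < eps ->
  sq (irls_step a w eps p x - a k) <= \sum_k0 \sum_j sq (a k0 - a j).
Proof.
move=> w0 e0.
set mu := irls_mu a w eps p x.
set M := \sum_j mu j.
have M0 : 0 < M := lt_le_trans (mu_gt0 a p x (w0 j0) e0) (M_ge a p x j0 w0 e0).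
set v := irls_step a w eps p x.
have Hid : \sum_j mu j * sq (a k - a j) = \sum_j mu j * sq (v - a j) + M * sq (a k - v).
  exact: (@vid _ _ _ mu a (a k) (lt0r_neq0 M0)).
have H1 : M * sq (a k - v) <= M * \sum_j sq (a k - a j).
  apply: (@le_trans _ _ (\sum_j mu j * sq (a k - a j))).
    rewrite Hid lerDr; apply: sumr_ge0 => j _; apply: mulr_ge0; last exact: sq_ge0.
    exact: ltW (mu_gt0 a p x (w0 j) e0).
  rewrite mulr_sumr; apply: ler_sum => j _; apply: ler_wpM2r; first exact: sq_ge0.
  exact: M_ge.
rewrite ler_pM2l // in H1.
rewrite sqC (le_trans H1) //.
apply: (@ge_sum_term _ _ (fun k0 => \sum_j sq (a k0 - a j))) => i.
by apply: sumr_ge0 => j _; exact: sq_ge0.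
Qed.

Theorem proposition3 (R : realType) (d n : nat) (a : 'I_n -> 'rV[R]_d)
  (w : 'I_n -> R) (eps p : R) (x0 : 'rV[R]_d) :
  (1 <= d)%N -> (1 <= n)%N ->
  (forall j, 0 < w j) -> 0 < eps -> 0 < p -> p <= 2 ->
  (fun t : nat => enorm (irls_seq a w eps p x0 t - irls_seq a w eps p x0 t.+1))
    @ \oo --> (0 : R).
Proof.
move=> _ n1 w0 e0 p0 p2.
pose j0 : 'I_n := Ordinal n1.
set X := irls_seq a w eps p x0.
have XS t : X t.+1 = irls_step a w eps p (X t) by [].
pose G t := Fobj a w eps p (X t.+1).
pose M t := \sum_j irls_mu a w eps p (X t) j.
have Gdec t : G t.+1 + p / 2 * M t.+1 * sq (X t.+1 - X t.+2) <= G t.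
  by rewrite /G /M [X t.+2]XS; apply: decrease.
have G0 t : 0 <= G t.
  rewrite /G /Fobj; apply: sumr_ge0 => j _; apply: mulr_ge0; first exact: ltW.
  exact: powR_ge0.
have M0 t : 0 <= M t.
  by apply: sumr_ge0 => j _; apply: ltW; apply: mu_gt0.
have Gni : nonincreasing_seq G.
  apply/nonincreasing_seqP => t; apply: le_trans (Gdec t).
  rewrite lerDl; apply: mulr_ge0; last exact: sq_ge0.
  by apply: mulr_ge0 => //; rewrite divr_ge0 // ltW.
clearbody G.
have Gcv : cvgn G.
  apply: nonincreasing_is_cvgn => //; exists 0 => _ [t _ <-]; exact: G0.
have GD : (fun t => G t - G t.+1) @ \oo --> (0 : R).
  have H1 : G @ \oo --> limn G by exact: Gcv.
  have H2 : (fun t => G t.+1) @ \oo --> limn G by rewrite (cvg_shiftS G).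
  have := cvgB H1 H2.
  by rewrite subrr; apply.
set B := \sum_k0 \sum_j sq (a k0 - a j).
pose c := w j0 * (B + eps) `^ (p / 2 - 1).
have c0 : 0 < c by rewrite mulr_gt0 // powR_gt0 // ltr_wpDl //; apply: sumr_ge0 => k _;
  apply: sumr_ge0 => j _; exact: sq_ge0.
have cM t : c <= M t.+1.
  apply: le_trans (M_ge a p (X t.+1) j0 w0 e0).
  rewrite /irls_mu ler_wpM2l ?(ltW (w0 j0)) // enorm_sq; apply: anti.
  - by rewrite ltr_wpDl // sq_ge0.
  - by rewrite lerD2r XS; apply: bound.
  - by rewrite subr_le0 ler_pdivrMr //= mul1r.
have pc0 : 0 < p / 2 * c by rewrite mulr_gt0 // divr_gt0.
have key t : p / 2 * c * sq (X t.+1 - X t.+2) <= G t - G t.+1.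
  have h3 := Gdec t.
  have h4 : p / 2 * c * sq (X t.+1 - X t.+2) <= p / 2 * M t.+1 * sq (X t.+1 - X t.+2).
    by rewrite ler_wpM2r ?sq_ge0 // ler_wpM2l // divr_ge0 // ltW.
  lra.
have Hsq : (fun t => sq (X t.+1 - X t.+2)) @ \oo --> (0 : R).
  apply: (@squeeze_cvgr _ _ _ _ (fun=> 0) (fun t => (p / 2 * c)^-1 * (G t - G t.+1))).
  - near=> t; rewrite sq_ge0 /= ler_pdivlMl //; exact: key.
  - exact: cvg_cst.
  - by rewrite -(mulr0 (p / 2 * c)^-1); apply: cvgMr.
rewrite -cvg_shiftS /=.
have := cvg_comp _ _ Hsq (@sqrt_continuous R 0).
by rewrite sqrtr0.
Unshelve. all: by end_near.
Qed.
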